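(* Let $\Gamma=(\mathcal{V},\mathcal{H})$ be an oriented hypergraph with normalized Laplacian $L$. If $\Gamma$ has $\hat{n}$ vertices that are pairwise twins, then $0$ is an eigenvalue of $L$ with multiplicity at least $\hat{n}-1$. Furthermore, if $v_i$ and $v_j$ are twin vertices and $f:\mathcal{V}\to\mathbb{R}$ is an eigenfunction of $L$ with eigenvalue $\lambda\neq 0$, then $f(v_i)=f(v_j)$.
   Context: An oriented hypergraph is a pair $\Gamma=(\mathcal{V},\mathcal{H})$ where $\mathcal{V}=\{v_1,\ldots,v_N\}$ is a finite set and each hyperedge $h$ is a pair $(h_{in},h_{out})$ of disjoint nonempty subsets of $\mathcal{V}$; standing assumption: no isolated vertices. Vertices are co-oriented in $h$ if they lie in the same one of $h_{in},h_{out}$, anti-oriented if in different ones. $\deg(v)$ is the number of hyperedges containing $v$, $D$ the diagonal degree matrix; the adjacency matrix has $A_{ii}=0$ and $A_{ij}=\#\{h: v_i,v_j\text{ anti-oriented in }h\}-\#\{h:v_i,v_j\text{ co-oriented in }h\}$ for $i\ne j$; $L=\mathrm{Id}-D^{-1}A$, acting on functions $f:\mathcal{V}\to\mathbb{R}$ by $Lf(v_i)=f(v_i)-\frac{1}{\deg v_i}\sum_{j} A_{ij}f(v_j)$. Two vertices are twins if they belong to exactly the same hyperedges and, in each such hyperedge, are co-oriented (so $A_{ij}=-\deg v_i=-\deg v_j$ and $A_{ik}=A_{jk}$ for $k\ne i,j$). *)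

(* Defs.v *)
From HB Require Import structures.
From mathcomp Require Import all_boot all_order all_algebra.
Set Implicit Arguments. Unset Strict Implicit. Unset Printing Implicit Defensive.
Import Order.TTheory GRing.Theory Num.Theory.
Local Open Scope ring_scope.

(* An oriented hypergraph on vertex set 'I_N with hyperedges indexed by a
   finite type Hh: hyperedge h is the pair (hin h, hout h). *)
Definition oriented_hypergraph (N : nat) (Hh : finType)
  (hin hout : Hh -> {set 'I_N}) : Prop :=
  (forall h, [disjoint hin h & hout h]) /\
  (forall h, hin h != set0) /\ (forall h, hout h != set0).

Definition no_isolated (N : nat) (Hh : finType) (hin hout : Hh -> {set 'I_N}) : Prop :=
  forall v : 'I_N, exists h, v \in hin h :|: hout h.

Definition hdeg (N : nat) (Hh : finType) (hin hout : Hh -> {set 'I_N}) (v : 'I_N) : nat :=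
  #|[set h | v \in hin h :|: hout h]|.

Definition co_edges (N : nat) (Hh : finType) (hin hout : Hh -> {set 'I_N}) (i j : 'I_N) :=
  [set h | ((i \in hin h) && (j \in hin h)) || ((i \in hout h) && (j \in hout h))].
Definition anti_edges (N : nat) (Hh : finType) (hin hout : Hh -> {set 'I_N}) (i j : 'I_N) :=
  [set h | ((i \in hin h) && (j \in hout h)) || ((i \in hout h) && (j \in hin h))].

Definition adjmx (R : ringType) (N : nat) (Hh : finType) (hin hout : Hh -> {set 'I_N})
  : 'M[R]_N :=
  \matrix_(i, j) (if i == j then 0
                  else (#|anti_edges hin hout i j|%:R - #|co_edges hin hout i j|%:R)).

Definition laplacian (R : fieldType) (N : nat) (Hh : finType) (hin hout : Hh -> {set 'I_N})
  : 'M[R]_N :=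
  \matrix_(i, j) ((i == j)%:R - (hdeg hin hout i)%:R^-1 * adjmx R hin hout i j).

Definition twins (N : nat) (Hh : finType) (hin hout : Hh -> {set 'I_N}) (i j : 'I_N) : Prop :=
  forall h, ((i \in hin h) = (j \in hin h)) /\ ((i \in hout h) = (j \in hout h)).

(* Main.v *)
Require Import Defs.
From HB Require Import structures.
From mathcomp Require Import all_boot all_order all_algebra.
Import Order.TTheory GRing.Theory Num.Theory.
Local Open Scope ring_scope.

Section Twins.
Variables (R : realFieldType) (N : nat) (Hh : finType) (hin hout : Hh -> {set 'I_N}).
Hypothesis Hdis : forall h, [disjoint hin h & hout h].

Lemma twins_sym i j : twins hin hout i j -> twins hin hout j i.
Proof. by move=> T h; have [-> ->] := T h. Qed.

Lemma twins_deg i j : twins hin hout i j -> hdeg hin hout i = hdeg hin hout j.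
Proof.
move=> T; rewrite /hdeg; apply: eq_card => h; rewrite !inE.
by have [-> ->] := T h.
Qed.

Lemma twins_co_l a i j : twins hin hout i j -> co_edges hin hout a i = co_edges hin hout a j.
Proof. by move=> T; apply/setP => h; rewrite !inE; have [-> ->] := T h. Qed.
Lemma twins_anti_l a i j : twins hin hout i j -> anti_edges hin hout a i = anti_edges hin hout a j.
Proof. by move=> T; apply/setP => h; rewrite !inE; have [-> ->] := T h. Qed.
Lemma twins_co_r a i j : twins hin hout i j -> co_edges hin hout i a = co_edges hin hout j a.
Proof. by move=> T; apply/setP => h; rewrite !inE; have [-> ->] := T h. Qed.
Lemma twins_anti_r a i j : twins hin hout i j -> anti_edges hin hout i a = anti_edges hin hout j a.
Proof. by move=> T; apply/setP => h; rewrite !inE; have [-> ->] := T h. Qed.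

Lemma twins_adj_ij i j : twins hin hout i j -> i != j ->
  adjmx R hin hout i j = - (hdeg hin hout i)%:R.
Proof.
move=> T nij; rewrite mxE (negbTE nij).
have -> : anti_edges hin hout i j = set0.
  apply/setP => h; rewrite !inE; have [<- <-] := T h.
  case Hi: (i \in hin h); case Ho: (i \in hout h) => //=.
  by rewrite (disjointFr (Hdis h) Hi) in Ho.
have -> : co_edges hin hout i j = [set h | i \in hin h :|: hout h].
  by apply/setP => h; rewrite !inE; have [<- <-] := T h; rewrite !andbb.
by rewrite cards0 sub0r.
Qed.

Lemma lap_entries i j : twins hin hout i j -> i != j -> hdeg hin hout i != 0%N ->
  (forall k, laplacian R hin hout k i = laplacian R hin hout k j) /\
  (forall k, laplacian R hin hout i k = laplacian R hin hout j k).
Proof.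
move=> T nij d0.
have T' := twins_sym _ _ T.
have nji : j != i by rewrite eq_sym.
have dE := twins_deg _ _ T.
have d0' : (hdeg hin hout i)%:R != 0 :> R by rewrite pnatr_eq0.
have Lii : laplacian R hin hout i i = 1 by rewrite !mxE !eqxx mulr0 subr0.
have Ljj : laplacian R hin hout j j = 1 by rewrite !mxE !eqxx mulr0 subr0.
have Lij : laplacian R hin hout i j = 1.
  by rewrite mxE (twins_adj_ij _ _ T nij) (negbTE nij) sub0r mulrN opprK mulVf.
have Lji : laplacian R hin hout j i = 1.
  by rewrite mxE (twins_adj_ij _ _ T' nji) (negbTE nji) sub0r mulrN opprK -dE mulVf.
split=> k.
- have [->|nki] := eqVneq k i; first by rewrite Lii Lij.
  have [->|nkj] := eqVneq k j; first by rewrite Lji Ljj.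
  have nik : (i == k) = false by rewrite eq_sym (negbTE nki).
  have njk : (j == k) = false by rewrite eq_sym (negbTE nkj).
  rewrite !mxE ?(negbTE nki) ?(negbTE nkj) ?nik ?njk.
  by rewrite (twins_co_l k _ _ T) (twins_anti_l k _ _ T).
- have [->|nki] := eqVneq k i; first by rewrite Lii Lji.
  have [->|nkj] := eqVneq k j; first by rewrite Lij Ljj.
  have nik : (i == k) = false by rewrite eq_sym (negbTE nki).
  have njk : (j == k) = false by rewrite eq_sym (negbTE nkj).
  rewrite !mxE ?(negbTE nki) ?(negbTE nkj) ?nik ?njk.
  by rewrite (twins_co_r k _ _ T) (twins_anti_r k _ _ T) dE.
Qed.
End Twins.

Lemma sum_ind (R : ringType) (N : nat) (F : 'I_N -> R) a :
  \sum_n (n == a)%:R * F n = F a.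
Proof.
rewrite (bigD1 a) //= eqxx mul1r big1 ?addr0 // => n /negbTE ->.
by rewrite mul0r.
Qed.

Theorem mainTheorem4 (R : realFieldType) (N : nat) (Hh : finType)
  (hin hout : Hh -> {set 'I_N}) :
  oriented_hypergraph hin hout -> no_isolated hin hout ->
  (forall S : {set 'I_N},
     {in S &, forall i j, i != j -> twins hin hout i j} ->
     (#|S|.-1 <= \rank (eigenspace (laplacian R hin hout) 0))%N)
  /\
  (forall (i j : 'I_N), twins hin hout i j ->
     forall (lambda : R) (f : 'cV[R]_N), lambda != 0 -> f != 0 ->
       laplacian R hin hout *m f = lambda *: f -> f i 0 = f j 0).
Proof.
move=> [Hdis _] Hiso.
have d0 : forall i, hdeg hin hout i != 0%N.
  move=> i; have [h Hh'] := Hiso i; rewrite -lt0n card_gt0.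
  by apply/set0Pn; exists h; rewrite inE.
set L := laplacian R hin hout.
split.
- move=> S HS.
  have [S0|[s0 s0S]] := set_0Vmem S; first by rewrite S0 cards0.
  set S' := S :\ s0.
  have -> : #|S|.-1 = #|S'| by rewrite (cardsD1 s0 S) s0S.
  pose e := (@enum_val _ (mem S')).
  pose B : 'M[R]_(#|S'|, N) := \matrix_(r, n) ((n == e r)%:R - (n == s0)%:R).
  pose C : 'M[R]_(N, #|S'|) := \matrix_(n, r) (n == e r)%:R.
  have eS' r : e r \in S' := enum_valP r.
  have es0 r : e r != s0 by move: (eS' r); rewrite !inE => /andP [].
  have eS r : e r \in S by move: (eS' r); rewrite !inE => /andP [].
  have rB : \rank B = #|S'|.
    apply/eqP; apply/row_freeP; exists C; apply/matrixP => r r'.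
    rewrite !mxE.
    under eq_bigr => n _ do rewrite !mxE mulrBl.
    rewrite sumrB sum_ind sum_ind (eq_sym s0) (negbTE (es0 r')).
    by rewrite subr0 (inj_eq enum_val_inj) eq_sym.
  have BL : (B <= kermx L^T)%MS.
    apply/sub_kermxP; apply/matrixP => r i.
    rewrite [LHS]mxE [RHS]mxE.
    under eq_bigr => n _ do rewrite [B r n]mxE [L^T n i]mxE mulrBl.
    rewrite sumrB sum_ind sum_ind.
    have [C1 _] := lap_entries R N Hh hin hout Hdis _ _ (HS _ _ (eS r) s0S (es0 r)) (es0 r) (d0 _).
    by rewrite C1 subrr.
  have -> : eigenspace L 0 = kermx L.
    by rewrite /eigenspace (_ : 0%:M = 0) ?subr0 //; apply/matrixP => a b; rewrite !mxE mul0rn.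
  rewrite -rB; apply: (leq_trans (mxrankS BL)).
  by rewrite !mxrank_ker mxrank_tr.
- move=> i j T lambda f l0 _ Hf.
  have [<-|nij] := eqVneq i j; first by [].
  have [_ R1] := lap_entries R N Hh hin hout Hdis _ _ T nij (d0 i).
  have : (L *m f) i 0 = (L *m f) j 0.
    by rewrite !mxE; apply: eq_bigr => n _; rewrite R1.
  rewrite Hf !mxE => /eqP; rewrite -subr_eq0 -mulrBr mulf_eq0 (negbTE l0) /=.
  by rewrite subr_eq0 => /eqP.
Qed.
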